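(* Let $K\ge 1$ and $1\le K^{*}\le K$ be integers. Let $\alpha_1,\dots,\alpha_K$ be independent random variables with $\alpha_k\sim\mathrm{Bernoulli}(p_k)$, $p_k\in(0,1)$ for $k=1,\dots,K$, and write $\boldsymbol{\alpha}=(\alpha_1,\dots,\alpha_K)$. Let $R\in\{0,1\}$ be a response generated from the DINA model for an item whose required attributes are exactly the first $K^{*}$ attributes (i.e. its $Q$-matrix row is $\mathbf{q}=(1,\dots,1,0,\dots,0)$ with $K^{*}$ ones): that is, with ideal response $\xi=\prod_{k=1}^{K^{*}}\alpha_k$, $$P(R=1\mid\boldsymbol{\alpha})=\begin{cases}1-s,&\xi=1,\\ g,&\xi=0,\end{cases}$$ where the slipping parameter $s$ and guessing parameter $g$ satisfy $1-s>g$. Then the mis-specified linear additive model of $R$ regressed on $(\alpha_1,\dots,\alpha_K)$ has mean function $\mathbb{E}^{*}[R\mid\boldsymbol{\alpha}]=\beta_0+\beta_1\alpha_1+\dots+\beta_K\alpha_K$ with $\beta_l\neq 0$ for $l=1,\dots,K^{*}$ and $\beta_k=0$ for $k=K^{*}+1,\dots,K$.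
   Context: The mis-specified linear additive model's mean function $\mathbb{E}^{*}[R\mid\boldsymbol{\alpha}]$ denotes the population linear regression (least squares) mean function of $R$ on $\alpha_1,\dots,\alpha_K$ with an intercept, i.e. $\beta_0+\sum_{k=1}^K\beta_k\alpha_k$ where $(\beta_0,\dots,\beta_K)$ minimize $\mathbb{E}\big[(R-\beta_0-\sum_{k=1}^K\beta_k\alpha_k)^2\big]$ under the joint distribution of $(\boldsymbol{\alpha},R)$ described. *)

(* Defs.v *)
From HB Require Import structures.
From mathcomp Require Import all_boot all_order all_algebra.
From mathcomp Require Import reals.
Set Implicit Arguments. Unset Strict Implicit. Unset Printing Implicit Defensive.
Import Order.TTheory GRing.Theory Num.Theory.
Local Open Scope ring_scope.

Section DINA.
Variables (R : realType) (K Kstar : nat).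

Definition profile := {ffun 'I_K -> bool}.

Definition alpha_prob (p : 'I_K -> R) (a : profile) : R :=
  \prod_(k < K) (if a k then p k else 1 - p k).

Definition ideal_resp (a : profile) : bool :=
  [forall k : 'I_K, (k < Kstar)%N ==> a k].

Definition dina_p1 (s g : R) (a : profile) : R :=
  if ideal_resp a then 1 - s else g.

Definition joint_pmf (p : 'I_K -> R) (s g : R) (a : profile) (r : bool) : R :=
  alpha_prob p a * (if r then dina_p1 s g a else 1 - dina_p1 s g a).

Definition lin_pred (b0 : R) (b : 'I_K -> R) (a : profile) : R :=
  b0 + \sum_(k < K) b k * (a k)%:R.

Definition sq_loss (p : 'I_K -> R) (s g : R) (b0 : R) (b : 'I_K -> R) : R :=
  \sum_(a : profile) \sum_(r : bool)
     joint_pmf p s g a r * ((r%:R : R) - lin_pred b0 b a) ^+ 2.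

Definition is_pop_linreg (p : 'I_K -> R) (s g : R) (b0 : R) (b : 'I_K -> R) : Prop :=
  forall (c0 : R) (c : 'I_K -> R), sq_loss p s g b0 b <= sq_loss p s g c0 c.

End DINA.

(* Main.v *)
Require Import Defs.
From HB Require Import structures.
From mathcomp Require Import all_boot all_order all_algebra.
From mathcomp Require Import reals.
From mathcomp Require Import ring lra.
Import Order.TTheory GRing.Theory Num.Theory.
Local Open Scope ring_scope.

Section Pf.
Variables (R : realType) (K Kstar : nat) (p : 'I_K -> R).

Definition EE (f : profile K -> R) : R := \sum_(a : profile K) alpha_prob p a * f a.

Definition mono (S : pred 'I_K) (a : profile K) : R :=
  \prod_(j < K) (if S j then (a j)%:R else 1).

Lemma E_mono S : EE (mono S) = \prod_(j < K) (if S j then p j else 1).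
Proof.
rewrite /EE /mono /alpha_prob.
under eq_bigr => a _ do rewrite -big_split /=.
rewrite -(bigA_distr_bigA (fun j (b : bool) => (if b then p j else 1 - p j) * (if S j then (b:nat)%:R else 1))).
apply: eq_bigr => j _; rewrite big_bool /=.
by case: (S j); rewrite ?mulr1 ?mulr0 ?addr0 // subrKC.
Qed.

Lemma mono_mul S T a : mono S a * mono T a = mono (predU S T) a.
Proof.
rewrite /mono -big_split; apply: eq_bigr => j _ /=.
by case: (S j); case: (T j); case: (a j); rewrite /= ?mulr1 ?mul1r ?mulr0.
Qed.

Lemma mono1 k (a : profile K) : ((a k : nat)%:R : R) = mono (pred1 k) a.
Proof.
rewrite /mono (bigD1 k) //= eqxx big1 ?mulr1 // => j /negbTE -> //.
Qed.

Lemma mono0 a : 1 = mono pred0 a.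
Proof. by rewrite /mono big1. Qed.

Lemma mono_xi (a : profile K) : ((ideal_resp Kstar a : nat)%:R : R) = mono (fun j : 'I_K => (j < Kstar)%N) a.
Proof.
rewrite /ideal_resp /mono; case: (boolP [forall _, _]) => h.
  rewrite big1 // => j _; case: ifP => // hj.
  by move/forallP: h => /(_ j); rewrite hj /= => ->.
move/forallPn: h => [j]; rewrite negb_imply => /andP[hj haj].
by rewrite (bigD1 j) //= hj (negbTE haj) mul0r.
Qed.


Lemma E_ext {f h} : f =1 h -> EE f = EE h.
Proof. by move=> e; apply: eq_bigr => a _; rewrite e. Qed.

Lemma E_add f h : EE (fun a => f a + h a) = EE f + EE h.
Proof. by rewrite /EE -big_split; apply: eq_bigr => a _; rewrite mulrDr. Qed.

Lemma E_scale x f : EE (fun a => x * f a) = x * EE f.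
Proof. by rewrite /EE big_distrr; apply: eq_bigr => a _; rewrite mulrCA. Qed.

Lemma E_sum (w : 'I_K -> profile K -> R) :
  EE (fun a => \sum_(k < K) w k a) = \sum_(k < K) EE (w k).
Proof.
rewrite /EE (exchange_big); apply: eq_bigr => a _ /=.
by rewrite big_distrr.
Qed.

Lemma E1 : EE (fun _ => 1) = 1.
Proof. by rewrite (E_ext (@mono0)) E_mono big1. Qed.

Lemma Ea k : EE (fun a => ((a k : nat)%:R)) = p k.
Proof.
rewrite (E_ext (mono1 k)) E_mono (bigD1 k) //= eqxx big1 ?mulr1 //.
by move=> j /negbTE ->.
Qed.

Lemma Eaa j k : EE (fun a => ((a j : nat)%:R) * (a k : nat)%:R) =
   if j == k then p k else p j * p k.
Proof.
rewrite (E_ext (fun a => (etrans (congr2 _ (mono1 j a) (mono1 k a)) (mono_mul _ _ a)))).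
rewrite E_mono; case: eqP => [->|/eqP njk].
  rewrite (bigD1 k) //= orbb eqxx big1 ?mulr1 //.
  by move=> i /negbTE ->.
rewrite (bigD1 j) //= eqxx (bigD1 k) 1?eq_sym //= eqxx orbT big1 ?mulr1 //.
by move=> i /andP[/negbTE -> /negbTE ->].
Qed.

Definition PP := \prod_(j < K) (if (j < Kstar)%N then p j else 1).

Lemma Exi : EE (fun a => ((ideal_resp Kstar a : nat)%:R)) = PP.
Proof. by rewrite (E_ext mono_xi) E_mono. Qed.

Lemma Exia k : EE (fun a => ((ideal_resp Kstar a : nat)%:R) * (a k : nat)%:R) =
   if (k < Kstar)%N then PP else PP * p k.
Proof.
rewrite (E_ext (fun a => (etrans (congr2 _ (mono_xi a) (mono1 k a)) (mono_mul _ _ a)))).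
rewrite E_mono /PP; case: ifP => hk.
  apply: eq_bigr => i _ /=; case: eqP => [->|_]; by rewrite ?hk ?orbT ?orbF.
rewrite (bigD1 k) //= eqxx orbT [in RHS](bigD1 k) //= hk mul1r mulrC; congr (_ * _).
by apply: eq_bigr => i /negbTE ->; rewrite orbF.
Qed.


Lemma E_const x : EE (fun _ => x) = x.
Proof.
by rewrite (@E_ext _ (fun _ => x * 1)) ?E_scale ?E1 ?mulr1 // => a; rewrite mulr1.
Qed.

Lemma E_sub f h : EE (fun a => f a - h a) = EE f - EE h.
Proof.
rewrite (@E_ext _ (fun a => f a + (-1) * h a)) ?E_add ?E_scale ?mulN1r // => a.
by rewrite mulN1r.
Qed.

Lemma E_lin c0 c : EE (fun a => lin_pred c0 c a) = c0 + \sum_(k < K) c k * p k.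
Proof.
rewrite /lin_pred E_add E_const E_sum; congr (_ + _).
by apply: eq_bigr => k _; rewrite E_scale Ea.
Qed.

Lemma E_lin_a c0 c k : EE (fun a => lin_pred c0 c a * (a k : nat)%:R) =
  c0 * p k + (\sum_(j < K) c j * p j) * p k + c k * (p k * (1 - p k)).
Proof.
rewrite (@E_ext _ (fun a => c0 * (a k : nat)%:R + \sum_(j < K) c j * ((a j : nat)%:R * (a k : nat)%:R))); last first.
  by move=> a; rewrite /lin_pred mulrDl big_distrl; congr (_ + _); apply: eq_bigr => j _; rewrite mulrA.
rewrite E_add E_scale Ea E_sum -addrA; congr (_ + _).
under eq_bigr => j _ do rewrite E_scale Eaa.
rewrite big_distrl /= (bigD1 k) //= eqxx [in RHS](bigD1 k) //=.
have -> : \sum_(i < K | i != k) c i * (if i == k then p k else p i * p k) =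
   \sum_(i < K | i != k) c i * p i * p k.
  by apply: eq_bigr => j /negbTE ->; rewrite mulrA.
ring.
Qed.

Lemma alpha_prob_gt0 (hp : forall k, 0 < p k < 1) a : 0 < alpha_prob p a.
Proof.
apply: prodr_gt0 => k _; have /andP[h1 h2] := hp k.
by case: (a k); rewrite ?subr_gt0.
Qed.


Variables (s g : R).

Definition cc := 1 - s - g.
Definition bb (k : 'I_K) : R := if (k < Kstar)%N then cc * PP / p k else 0.
Definition bb0 : R := g + cc * PP - \sum_(k < K) bb k * p k.

Lemma m_eq (a : profile K) : dina_p1 Kstar s g a = g + cc * (ideal_resp Kstar a : nat)%:R.
Proof. by rewrite /dina_p1 /cc; case: (ideal_resp Kstar a) => /=; rewrite ?mulr1 ?mulr0 ?addr0 //; ring. Qed.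

Lemma sq_lossE x0 x : sq_loss Kstar p s g x0 x =
  EE (fun a => dina_p1 Kstar s g a * (1 - dina_p1 Kstar s g a)) +
  EE (fun a => (dina_p1 Kstar s g a - lin_pred x0 x a) ^+ 2).
Proof.
rewrite /sq_loss /EE -big_split; apply: eq_bigr => a _ /=.
rewrite big_bool /joint_pmf /=; ring.
Qed.

Lemma Em : EE (fun a => dina_p1 Kstar s g a) = g + cc * PP.
Proof. by rewrite (E_ext m_eq) E_add E_const E_scale Exi. Qed.

Lemma orth0 : EE (fun a => dina_p1 Kstar s g a - lin_pred bb0 bb a) = 0.
Proof. by rewrite E_sub Em E_lin /bb0; ring. Qed.

Lemma orthk (hp : forall k, 0 < p k < 1) k :
  EE (fun a => (dina_p1 Kstar s g a - lin_pred bb0 bb a) * (a k : nat)%:R) = 0.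
Proof.
rewrite (@E_ext _ (fun a => dina_p1 Kstar s g a * (a k : nat)%:R - lin_pred bb0 bb a * (a k : nat)%:R)); last by move=> a; rewrite mulrBl.
rewrite E_sub E_lin_a.
rewrite (@E_ext _ (fun a => g * (a k : nat)%:R + cc * ((ideal_resp Kstar a : nat)%:R * (a k : nat)%:R))); last by move=> a; rewrite m_eq mulrDl mulrA.
rewrite E_add !E_scale Ea Exia /bb0.
have /andP[h1 h2] := hp k.
rewrite /bb; case: ifP => hk.
  by field; rewrite gt_eqF.
ring.
Qed.


Lemma lin_diff (x0 y0 : R) (x y : 'I_K -> R) (a : profile K) :
  lin_pred x0 x a - lin_pred y0 y a = (x0 - y0) + \sum_(k < K) (x k - y k) * (a k : nat)%:R.
Proof.
rewrite /lin_pred opprD addrACA -sumrB; congr (_ + _).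
by apply: eq_bigr => k _; rewrite mulrBl.
Qed.

Lemma pythag (hp : forall k, 0 < p k < 1) (c0 : R) (c : 'I_K -> R) :
  sq_loss Kstar p s g c0 c = sq_loss Kstar p s g bb0 bb +
    EE (fun a => (lin_pred bb0 bb a - lin_pred c0 c a) ^+ 2).
Proof.
rewrite !sq_lossE -addrA; congr (_ + _).
set e := fun a => dina_p1 Kstar s g a - lin_pred bb0 bb a.
set d := fun a => lin_pred bb0 bb a - lin_pred c0 c a.
rewrite (@E_ext _ (fun a => (e a ^+ 2 + 2 * (e a * d a)) + d a ^+ 2)); last first.
  by move=> a; rewrite /e /d; ring.
rewrite !E_add E_scale.
have -> : EE (fun a => e a * d a) = 0.
  rewrite (@E_ext _ (fun a => (bb0 - c0) * e a + \sum_(k < K) (bb k - c k) * (e a * (a k : nat)%:R))); last first.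
    move=> a; rewrite /d lin_diff mulrDr mulrC; congr (_ + _).
    by rewrite big_distrr; apply: eq_bigr => k _ /=; ring.
  rewrite E_add E_scale E_sum orth0 mulr0 add0r big1 // => k _.
  by rewrite E_scale orthk // mulr0.
by rewrite mulr0 addr0.
Qed.

End Pf.

Theorem proposition1 (R : realType) (K Kstar : nat)
  (hK : (1 <= K)%N) (hKs1 : (1 <= Kstar)%N) (hKsK : (Kstar <= K)%N)
  (p : 'I_K -> R) (hp : forall k, 0 < p k < 1)
  (s g : R) (hs : 0 <= s <= 1) (hg : 0 <= g <= 1) (hsg : g < 1 - s) :
  (exists (b0 : R) (b : 'I_K -> R), is_pop_linreg Kstar p s g b0 b) /\
  (forall (b0 : R) (b : 'I_K -> R), is_pop_linreg Kstar p s g b0 b ->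
     (forall l : 'I_K, (l < Kstar)%N -> b l != 0) /\
     (forall k : 'I_K, (Kstar <= k)%N -> b k = 0)).
Proof.
pose B0 := bb0 R K Kstar p s g; pose B := bb R K Kstar p s g.
have PY := pythag R K Kstar p s g hp.
have AP := alpha_prob_gt0 R K p hp.
have hmin : is_pop_linreg Kstar p s g B0 B.
  move=> c0 c; rewrite (PY c0 c) lerDl.
  apply: sumr_ge0 => a _; apply: mulr_ge0; last exact: sqr_ge0.
  exact/ltW/AP.
split; first by exists B0, B.
move=> b0 b hb.
have hE : EE R K p (fun a => (lin_pred B0 B a - lin_pred b0 b a) ^+ 2) = 0.
  apply/eqP; rewrite eq_le; apply/andP; split.
    have := hb B0 B.
    by rewrite (PY b0 b) gerDl.
  apply: sumr_ge0 => a _; apply: mulr_ge0; last exact: sqr_ge0.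
  exact/ltW/AP.
have hpt : forall a : profile K, lin_pred B0 B a = lin_pred b0 b a.
  move=> a; move/eqP: hE; rewrite psumr_eq0; last first.
    move=> i _; apply: mulr_ge0; last exact: sqr_ge0.
    exact/ltW/AP.
  move/allP => /(_ a (mem_index_enum _)) /=.
  rewrite mulf_eq0 gt_eqF ?AP //= sqrf_eq0 subr_eq0 => /eqP //.
have h0 := hpt [ffun => false].
rewrite /lin_pred !big1 ?addr0 // in h0; try by move=> k _; rewrite ffunE mulr0.
have hbk : forall k, b k = B k.
  move=> k; have := hpt [ffun j => j == k].
  rewrite /lin_pred h0 => /addrI.
  rewrite (bigD1 k) //= [in X in _ = X -> _](bigD1 k) //= !ffunE eqxx !mulr1.
  rewrite !big1 ?addr0 //; try by move=> j /negbTE hj; rewrite ffunE hj mulr0.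
split => k hk; rewrite hbk /B /bb.
  rewrite hk; have /andP[h1 h2] := hp k.
  rewrite !mulf_neq0 ?invr_eq0 ?gt_eqF //.
    by rewrite /cc subr_gt0.
  rewrite /PP; apply: prodr_gt0 => j _; case: ifP => // _.
  by have /andP[] := hp j.
by rewrite ltnNge hk.
Qed.
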